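(* Let $k\geq1$ and $d_1,\dots,d_k\geq3$ be integers and $T=W_{d_1}\otimes\cdots\otimes W_{d_k}$. Then $Z_k$ is the only zero-dimensional scheme evincing the cactus rank of $T$; that is, $Z_k$ is the unique zero-dimensional scheme $A\subseteq(\mathbb{P}^1)^k$ with $\deg(A)=c_{d_1,\dots,d_k}(T)$ and $[T]\in\langle\nu_{d_1,\dots,d_k}(A)\rangle$.
   Context: Identify $S^d\mathbb{C}^2$ with binary forms in a basis $\{x,y\}$; $W_d=x^{d-1}y$. $\nu_{d_1,\dots,d_k}:(\mathbb{P}^1)^k\to\mathbb{P}(S^{d_1}\mathbb{C}^2\otimes\cdots\otimes S^{d_k}\mathbb{C}^2)$, $([v_1],\dots,[v_k])\mapsto[v_1^{d_1}\otimes\cdots\otimes v_k^{d_k}]$, is the Segre–Veronese embedding; $\langle Y\rangle$ denotes linear span of a subscheme. The cactus rank $c_{d_1,\dots,d_k}(T)$ is the minimal degree of a zero-dimensional scheme $A\subseteq(\mathbb{P}^1)^k$ with $[T]\in\langle\nu_{d_1,\dots,d_k}(A)\rangle$. Let $o_1=[x]\in\mathbb{P}^1$, $Z_1\subseteq\mathbb{P}^1$ the degree-2 scheme supported at $o_1$ with ideal $(\partial_y^2)$, and $Z_k=Z_1\times\cdots\times Z_1$ (degree $2^k$). *)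

(* Defs.v *)
From mathcomp Require Import all_boot all_algebra.
From mathcomp Require Import reals.
From mathcomp.real_closed Require Import complex.
From mathcomp Require Import mpoly.
Set Implicit Arguments. Unset Strict Implicit. Unset Printing Implicit Defensive.
Import GRing.Theory.
Local Open Scope ring_scope.

(* The Cox ring of (P^1)^k is S = F[X_1,Y_1,...,X_k,Y_k], multigraded by Z^k,
   realised as {mpoly F[k + k]}: X_i = 'X_(lshift k i), Y_i = 'X_(rshift k i).
   Here X_i = d/dx_i, Y_i = d/dy_i are the coordinates on the i-th P^1 = P(C^2)
   (C^2 with basis {x_i,y_i}).  The same polynomial ring, read in the variables
   x_i,y_i, models the tensor space S^{d_1}C^2 (x) ... (x) S^{d_k}C^2
   (multihomogeneous forms of multidegree d).
   A closed subscheme of (P^1)^k is encoded by its B-saturated multihomogeneous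
   ideal (B = prod_i (X_i,Y_i) the irrelevant ideal); this is a bijection
   (Cox). *)

Section Defs.
Variables (F : fieldType) (k : nat).
Local Notation S := {mpoly F[k + k]}.

Definition xv (i : 'I_k) : 'I_(k + k) := lshift k i.
Definition yv (i : 'I_k) : 'I_(k + k) := rshift k i.

Definition mono_mdeg (D : 'I_k -> nat) (m : 'X_{1..k + k}) : bool :=
  [forall i, m (xv i) + m (yv i) == D i].

Definition mhomog (D : 'I_k -> nat) (f : S) : Prop :=
  forall m, m \in msupp f -> mono_mdeg D m.

Definition mcomp (D : 'I_k -> nat) (f : S) : S :=
  \sum_(m <- msupp f | mono_mdeg D m) f@_m *: 'X_[m].

Definition is_ideal (I : S -> Prop) : Prop :=
  [/\ I 0, (forall f g, I f -> I g -> I (f + g)) & (forall f g, I g -> I (f * g))].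

Definition is_mhomog_ideal (I : S -> Prop) : Prop :=
  is_ideal I /\ forall f D, I f -> I (mcomp D f).

(* saturated w.r.t. B = prod_i (X_i,Y_i); B^N is generated by the monomials
   of multidegree (N,...,N) *)
Definition B_saturated (I : S -> Prop) : Prop :=
  forall f, (exists N, forall m, mono_mdeg (fun _ => N) m -> I ('X_[m] * f)) -> I f.

(* dim_F (S/I)_D = n : there are n forms of multidegree D whose classes form a
   basis of (S/I)_D *)
Definition hilb_eq (I : S -> Prop) (D : 'I_k -> nat) (n : nat) : Prop :=
  exists b : 'I_n -> S,
    [/\ forall j, mhomog D (b j),
        (forall c : 'I_n -> F, I (\sum_j c j *: b j) -> forall j, c j = 0) &
        (forall f, mhomog D f ->
           exists c : 'I_n -> F, I (f - \sum_j c j *: b j))].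

(* the scheme with ideal I has degree n: the Hilbert function is eventually
   equal to n (for all multidegrees D with every D i large) *)
Definition has_degree (I : S -> Prop) (n : nat) : Prop :=
  exists N, forall D : 'I_k -> nat, (forall i, (N <= D i)%N) -> hilb_eq I D n.

(* I is the ideal of a zero-dimensional subscheme of (P^1)^k (a closed
   subscheme whose multigraded Hilbert function is eventually constant) *)
Definition zero_dim_scheme (I : S -> Prop) : Prop :=
  [/\ is_mhomog_ideal I, B_saturated I & exists n, has_degree I n].

Definition apolar (G T : S) : F :=
  \sum_(m <- msupp G) G@_m * T@_m * (\prod_(j < k + k) ((m j)`!)%:R).

(* [T] lies in the linear span <nu_d(A)>, A the scheme with ideal I:
   T <> 0 and T is annihilated by (I)_d, i.e. by all hyperplanes containing
   nu_d(A) *)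
Definition in_span (d : 'I_k -> nat) (I : S -> Prop) (T : S) : Prop :=
  T != 0 /\ forall G, I G -> mhomog d G -> apolar G T = 0.

Definition is_cactus_rank (d : 'I_k -> nat) (T : S) (r : nat) : Prop :=
  (exists I, [/\ zero_dim_scheme I, has_degree I r & in_span d I T]) /\
  (forall I n, zero_dim_scheme I -> has_degree I n -> in_span d I T -> (r <= n)%N).

Definition Wtensor (d : 'I_k -> nat) : S :=
  \prod_(i < k) ('X_(xv i) ^+ (d i).-1 * 'X_(yv i)).

(* ideal of Z_k = Z_1 x ... x Z_1: generated by Y_1^2, ..., Y_k^2 *)
Definition Zk_ideal (f : S) : Prop :=
  exists g : 'I_k -> S, f = \sum_(i < k) g i * 'X_(yv i) ^+ 2.

End Defs.

(* Main.v *)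
Require Import Defs.
From mathcomp Require Import all_boot all_algebra.
From mathcomp Require Import reals.
From mathcomp.real_closed Require Import complex.
From mathcomp Require Import mpoly.
From mathcomp Require Import zify.
From Stdlib Require Import Classical.
Import GRing.Theory Num.Theory.
Local Open Scope ring_scope.
Set Implicit Arguments. Unset Strict Implicit. Unset Printing Implicit Defensive.

Section Gen.
Variables (F : numFieldType) (k : nat).
Local Notation S := {mpoly F[k + k]}.
Local Notation mnm := ('X_{1..k + k}).
Implicit Types (D E : 'I_k -> nat) (f g p : S).

Lemma xv_eq (i j : 'I_k) : (xv i == xv j) = (i == j).
Proof. exact: eq_lshift. Qed.
Lemma yv_eq (i j : 'I_k) : (yv i == yv j) = (i == j).
Proof. exact: eq_rshift. Qed.
Lemma xyv_eq (i j : 'I_k) : (xv i == yv j) = false.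
Proof. exact: eq_lrshift. Qed.
Lemma yxv_eq (i j : 'I_k) : (yv i == xv j) = false.
Proof. exact: eq_rlshift. Qed.

Lemma idx_cases (j : 'I_(k + k)) : (exists i, j = xv i) \/ (exists i, j = yv i).
Proof.
have := splitK j; case: (split j) => i /= <-; [left|right]; by exists i.
Qed.

Definition mkm (h : 'I_(k + k) -> nat) : mnm := [multinom h j | j < k + k].
Lemma mkmE h j : mkm h j = h j.
Proof. exact: mnmE. Qed.

Definition sfun (a b : 'I_k -> nat) (j : 'I_(k + k)) : nat :=
  match split j with inl i => a i | inr i => b i end.
Lemma sfun_x a b i : sfun a b (xv i) = a i.
Proof. by rewrite /sfun /xv -[lshift k i]/(unsplit (inl i)) unsplitK. Qed.
Lemma sfun_y a b i : sfun a b (yv i) = b i.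
Proof. by rewrite /sfun /yv -[rshift k i]/(unsplit (inr i)) unsplitK. Qed.

Definition mks a b := mkm (sfun a b).
Lemma mks_x a b i : mks a b (xv i) = a i.
Proof. by rewrite /mks mkmE sfun_x. Qed.
Lemma mks_y a b i : mks a b (yv i) = b i.
Proof. by rewrite /mks mkmE sfun_y. Qed.

Lemma mnm_eqxy (m1 m2 : mnm) :
  (forall i, m1 (xv i) = m2 (xv i)) -> (forall i, m1 (yv i) = m2 (yv i)) -> m1 = m2.
Proof.
move=> hx hy; apply/mnmP => j; case: (idx_cases j) => -[i ->]; by [rewrite hx|rewrite hy].
Qed.

Definition mdegv (m : mnm) (i : 'I_k) : nat := (m (xv i) + m (yv i))%N.

Lemma mono_mdegP D m : mono_mdeg D m <-> forall i, mdegv m i = D i.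
Proof.
split => [/forallP h i|h]; first exact/eqP/h.
by apply/forallP => i; apply/eqP; exact: (h i).
Qed.

Lemma mono_mdeg_ext D D' m : (forall i, D i = D' i) -> mono_mdeg D m -> mono_mdeg D' m.
Proof. by move=> h /mono_mdegP h1; apply/mono_mdegP => i; rewrite h1. Qed.

Lemma mhomog_ext D D' f : (forall i, D i = D' i) -> mhomog D f -> mhomog D' f.
Proof. by move=> h hf m /hf; apply: mono_mdeg_ext. Qed.

Lemma mono_mdegD D E a b : mono_mdeg D a -> mono_mdeg E b ->
  mono_mdeg (fun i => D i + E i)%N (a + b)%MM.
Proof.
move=> /mono_mdegP ha /mono_mdegP hb; apply/mono_mdegP => i.
by rewrite /mdegv !mnmDE -ha -hb /mdegv addnACA.
Qed.

Lemma mhomog0 D : mhomog D (0 : S).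
Proof. by move=> m; rewrite msupp0. Qed.

Lemma mhomogD D (f g : S) : mhomog D f -> mhomog D g -> mhomog D (f + g).
Proof. by move=> hf hg m /msuppD_le; rewrite mem_cat => /orP[/hf|/hg]. Qed.

Lemma mhomogZ D c (f : S) : mhomog D f -> mhomog D (c *: f).
Proof. by move=> hf m /msuppZ_le /hf. Qed.

Lemma mhomogX D m : mono_mdeg D m -> mhomog D ('X_[m] : S).
Proof. by move=> h m'; rewrite msuppX mem_seq1 => /eqP ->. Qed.

Lemma mcoefXM (a m : mnm) (p : S) : ('X_[a] * p)@_(a + m) = p@_m.
Proof. by rewrite mulrC mcoeffMX. Qed.

Lemma msuppXM (a : mnm) (p : S) m : m \in msupp ('X_[a] * p) ->
  exists2 m', m' \in msupp p & m = (a + m')%MM.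
Proof.
rewrite mulrC (perm_mem (msuppMX _ _)) => /mapP [m' h ->]; by exists m'.
Qed.

Lemma mhomogXM D E (a : mnm) (p : S) : mono_mdeg E a -> mhomog D p ->
  mhomog (fun i => E i + D i)%N ('X_[a] * p).
Proof.
move=> ha hp m /msuppXM [m' /hp hm' ->]; exact: mono_mdegD.
Qed.

End Gen.

Section Lin.
Variables (F : numFieldType) (k : nat).
Local Notation S := {mpoly F[k + k]}.
Local Notation mnm := ('X_{1..k + k}).
Implicit Types (D E : 'I_k -> nat) (f g : S) (I : S -> Prop).

Section Ideal.
Variable I : S -> Prop.
Hypothesis hI : is_ideal I.

Lemma I0 : I 0. Proof. by case: hI. Qed.
Lemma ID f g : I f -> I g -> I (f + g). Proof. by case: hI => _ h _; apply: h. Qed.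
Lemma IMl f g : I g -> I (f * g). Proof. by case: hI => _ _ h; apply: h. Qed.
Lemma IMr f g : I f -> I (f * g). Proof. by rewrite mulrC; apply: IMl. Qed.
Lemma IZ c f : I f -> I (c *: f). Proof. by rewrite -mul_mpolyC; apply: IMl. Qed.
Lemma IN f : I f -> I (- f). Proof. by rewrite -scaleN1r; apply: IZ. Qed.
Lemma IB f g : I f -> I g -> I (f - g). Proof. by move=> hf hg; apply: ID => //; apply: IN. Qed.
Lemma IBr f g : I (f - g) -> I g -> I f.
Proof. by move=> h hg; rewrite -(subrK g f); apply: ID. Qed.
Lemma Isum (T : Type) (r : seq T) (P : pred T) (G : T -> S) :
  (forall x, P x -> I (G x)) -> I (\sum_(x <- r | P x) G x).
Proof. by move=> h; elim/big_rec: _ => [|x y Px Iy]; [apply: I0|apply: ID => //; apply: h]. Qed.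
End Ideal.

Definition indep I p (w : 'I_p -> S) :=
  forall c : 'I_p -> F, I (\sum_j c j *: w j) -> forall j, c j = 0.

Lemma dep_vec p n (A : 'M[F]_(p, n)) : (n < p)%N ->
  exists2 v : 'rV[F]_p, v != 0 & v *m A = 0.
Proof.
move=> np; have : ~~ row_free A.
  by rewrite /row_free; apply: contraTN np => /eqP <-; rewrite -leqNgt rank_leq_col.
rewrite -kermx_eq0 => /rowV0Pn [v /sub_kermxP hv nz]; by exists v.
Qed.

Lemma subst_lin I (hI : is_ideal I) p n (w : 'I_p -> S) (b : 'I_n -> S) (C : 'M[F]_(p, n)) :
  (forall l, I (w l - \sum_j C l j *: b j)) ->
  forall mu : 'rV[F]_p,
    I (\sum_l mu 0 l *: w l - \sum_j (mu *m C) 0 j *: b j).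
Proof.
move=> h mu.
have -> : \sum_j (mu *m C) 0 j *: b j = \sum_l mu 0 l *: \sum_j C l j *: b j.
  under eq_bigr do rewrite mxE scaler_suml.
  rewrite exchange_big /=; apply: eq_bigr => l _; rewrite scaler_sumr.
  by apply: eq_bigr => j _; rewrite scalerA.
rewrite -sumrB; apply: Isum => // l _; rewrite -scalerBr; exact: IZ.
Qed.

Lemma count_le I (hI : is_ideal I) p n (w : 'I_p -> S) (b : 'I_n -> S) :
  indep I w -> (forall l, exists c : 'I_n -> F, I (w l - \sum_j c j *: b j)) ->
  (p <= n)%N.
Proof.
move=> hw /fin_all_exists [c hc]; rewrite leqNgt; apply/negP => np.
pose C : 'M[F]_(p, n) := \matrix_(l, j) c l j.
have hC : forall l, I (w l - \sum_j C l j *: b j).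
  by move=> l; under eq_bigr do rewrite mxE.
have [v nz vC] := dep_vec C np.
have := subst_lin hI hC v; rewrite vC.
have -> : \sum_j (0 : 'M[F]_(1,n)) 0 j *: b j = 0 by apply: big1 => j _; rewrite mxE scale0r.
rewrite subr0 => /hw h0.
by move/eqP: nz; apply; apply/rowP => j; rewrite [RHS]mxE h0.
Qed.

Lemma transfer_indep I (hI : is_ideal I) n (w : 'I_n -> S) (b : 'I_n -> S) :
  indep I w -> (forall l, exists c : 'I_n -> F, I (w l - \sum_j c j *: b j)) ->
  indep I b.
Proof.
move=> hw /fin_all_exists [c hc] c' hb.
pose C : 'M[F]_n := \matrix_(l, j) c l j.
have hC : forall l, I (w l - \sum_j C l j *: b j).
  by move=> l; under eq_bigr do rewrite mxE.
have Cfree : row_free C.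
  apply: inj_row_free => v vC; have := subst_lin hI hC v; rewrite vC.
  have -> : \sum_j (0 : 'M[F]_(1,n)) 0 j *: b j = 0 by apply: big1 => j _; rewrite mxE scale0r.
  rewrite subr0 => /hw h0; by apply/rowP => j; rewrite [RHS]mxE h0.
have Cu : C \in unitmx by rewrite -row_free_unit.
pose mu := (\row_j c' j) *m invmx C.
have muC : mu *m C = \row_j c' j by rewrite /mu mulmxKV.
have := subst_lin hI hC mu; rewrite muC.
have -> : \sum_j (\row_j0 c' j0) 0 j *: b j = \sum_j c' j *: b j by apply: eq_bigr => j _; rewrite mxE.
move=> h; have /hw h0 : I (\sum_l mu 0 l *: w l) by apply: IBr h hb.
have mu0 : mu = 0 by apply/rowP => j; rewrite [RHS]mxE h0.
move=> j; move: muC; rewrite mu0 mul0mx => /rowP /(_ j); rewrite !mxE => <-.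
by [].
Qed.

End Lin.

Section Lift.
Variables (F : numFieldType) (k : nat).
Local Notation S := {mpoly F[k + k]}.
Local Notation mnm := ('X_{1..k + k}).
Implicit Types (D E : 'I_k -> nat) (f g u : S).

Variable I : S -> Prop.
Hypothesis hI : is_ideal I.
Hypothesis hsat : B_saturated I.

Definition lf (i : 'I_k) (t : F) : S := 'X_(xv i) + t *: 'X_(yv i).

Lemma XU_split (m : mnm) (j : 'I_(k + k)) : (0 < m j)%N ->
  'X_[m] = 'X_[(m - U_(j))%MM] * 'X_j :> S.
Proof.
move=> h; rewrite -mpolyXD submK //; apply/mnm_lepP => j'.
rewrite mnm1E; case: eqP => [<-|] //.
Qed.

Lemma sat1 i u : I ('X_(xv i) * u) -> I ('X_(yv i) * u) -> I u.
Proof.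
move=> hx hy; apply: hsat; exists 1%N => m /mono_mdegP /(_ i); rewrite /mdegv.
case: (posnP (m (xv i))) => [x0|xpos].
  rewrite x0 add0n => y1.
  by rewrite (@XU_split m (yv i)) ?y1 // -mulrA; apply: IMl.
by move=> _; rewrite (@XU_split m (xv i)) // -mulrA; apply: IMl.
Qed.

Lemma two_forms i s t u : s != t -> I (lf i s * u) -> I (lf i t * u) -> I u.
Proof.
move=> st hs ht.
have hY : I ('X_(yv i) * u).
  have -> : 'X_(yv i) * u = (s - t)^-1 *: (lf i s * u - lf i t * u).
    rewrite -mulrBl /lf opprD addrACA subrr add0r -scalerBl -scalerAl scalerA.
    by rewrite mulVf ?scale1r // subr_eq0.
  by apply: IZ => //; apply: IB.
apply: (sat1 (i := i)) => //.
have -> : 'X_(xv i) * u = lf i s * u - s *: ('X_(yv i) * u).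
  by rewrite /lf mulrDl scalerAl addrK.
by apply: IB => //; apply: IZ.
Qed.

Lemma direct i r (t : 'I_r -> F) (u : 'I_r -> S) : injective t ->
  (forall s, I (lf i (t s) * u s)) -> I (\sum_s u s) -> forall s, I (u s).
Proof.
elim: r t u => [|r IH] t u tinj hu hsum; first by case.
move: hsum; rewrite big_ord_recl => hsum.
set l0 := lf i (t ord0).
have H1 : I (\sum_(s' < r) l0 * u (lift ord0 s')).
  rewrite -mulr_sumr.
  have -> : l0 * (\sum_(s' < r) u (lift ord0 s')) = l0 * (u ord0 + \sum_(s' < r) u (lift ord0 s')) - l0 * u ord0.
    by rewrite mulrDr addrC addKr.
  apply: IB => //; first exact: IMl.
  exact: hu.
have hrest : forall s', I (u (lift ord0 s')).
  have := IH (fun s' => t (lift ord0 s')) (fun s' => l0 * u (lift ord0 s')).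
  move=> /(_ _ _ H1) h s'.
  have h2 : I (l0 * u (lift ord0 s')).
    apply: h => [a b /tinj /lift_inj //|s''].
    by rewrite mulrCA; apply: IMl.
  apply: (two_forms (s := t (lift ord0 s')) (t := t ord0)) => //.
  by apply/eqP => /tinj /eqP; rewrite eq_sym (negbTE (neq_lift _ _)).
have h0 : I (u ord0).
  rewrite -(addrK (\sum_(s' < r) u (lift ord0 s')) (u ord0)).
  by apply: IB => //; apply: Isum.
by move=> s; case: (unliftP ord0 s) => [s' ->|->].
Qed.

Lemma good_t i p (w : 'I_p -> S) : indep I w ->
  exists t, indep I (fun j => lf i t * w j).
Proof.
move=> hw; apply: NNPP => hno.
have bad : forall s : 'I_p.+1, exists c : 'I_p -> F,
    I (\sum_j c j *: (lf i (s%:R) * w j)) /\ exists j, c j != 0.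
  move=> s; apply: NNPP => hc; apply: hno; exists (s%:R) => c hc0 j.
  apply: NNPP => hj; apply: hc; exists c; split => //; exists j; exact/eqP.
have [cc hcc] := fin_all_exists bad.
pose A : 'M[F]_(p.+1, p) := \matrix_(s, j) cc s j.
have [v nz vA] := dep_vec A (ltnSn p).
pose u s := v 0 s *: \sum_j cc s j *: w j.
have uE s : u s = \sum_j (v 0 s * cc s j) *: w j.
  by rewrite /u scaler_sumr; apply: eq_bigr => j _; rewrite scalerA.
have hdir := @direct i p.+1 (fun s => (s : nat)%:R) u.
have tinj : injective (fun s : 'I_p.+1 => (s : nat)%:R : F).
  by move=> a b /eqP; rewrite eqr_nat => /eqP /val_inj.
have hu : forall s : 'I_p.+1, I (lf i (s : nat)%:R * u s).
  move=> s; rewrite /u -scalerAr mulr_sumr; apply: IZ => //.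
  under eq_bigr do rewrite -scalerAr.
  by case: (hcc s).
have hsum : I (\sum_s u s).
  have -> : \sum_s u s = 0.
    under eq_bigr do rewrite uE.
    rewrite exchange_big /=; apply: big1 => j _.
    rewrite -scaler_suml.
    have -> : \sum_s v 0 s * cc s j = (v *m A) 0 j.
      by rewrite mxE; apply: eq_bigr => s _; rewrite mxE.
    by rewrite vA mxE scale0r.
  exact: I0.
have hall := hdir tinj hu hsum.
apply/negP: nz; rewrite negbK; apply/eqP/rowP => s; rewrite [RHS]mxE.
have := hall s; rewrite uE => /hw h.
case: (hcc s) => _ [j cj]; move: (h j) => /eqP; rewrite mulf_eq0 (negbTE cj) orbF.
by move/eqP.
Qed.

Definition addi D (i : 'I_k) := fun j => (D j + (j == i))%N.

Lemma mono_U_x (i : 'I_k) : mono_mdeg (fun j => nat_of_bool (j == i)) (U_(xv i))%MM.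
Proof.
apply/mono_mdegP => j; rewrite /mdegv !mnm1E xv_eq xyv_eq addn0.
by rewrite eq_sym.
Qed.
Lemma mono_U_y (i : 'I_k) : mono_mdeg (fun j => nat_of_bool (j == i)) (U_(yv i))%MM.
Proof.
apply/mono_mdegP => j; rewrite /mdegv !mnm1E yv_eq yxv_eq add0n.
by rewrite eq_sym.
Qed.

Lemma mhomog_lf D i t (w : S) : mhomog D w -> mhomog (addi D i) (lf i t * w).
Proof.
move=> hw; rewrite /lf mulrDl -scalerAl.
apply: mhomogD; last apply: mhomogZ.
  apply: mhomog_ext (mhomogXM (mono_U_x i) hw) => j; exact: addnC.
apply: mhomog_ext (mhomogXM (mono_U_y i) hw) => j; exact: addnC.
Qed.

Lemma lift1 D i p (w : 'I_p -> S) : (forall j, mhomog D (w j)) -> indep I w ->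
  exists w' : 'I_p -> S, (forall j, mhomog (addi D i) (w' j)) /\ indep I w'.
Proof.
move=> hD hw; have [t ht] := good_t i hw.
exists (fun j => lf i t * w j); split => // j; exact: mhomog_lf.
Qed.

Lemma lift_to D D' p (w : 'I_p -> S) : (forall i, D i <= D' i)%N ->
  (forall j, mhomog D (w j)) -> indep I w ->
  exists w' : 'I_p -> S, (forall j, mhomog D' (w' j)) /\ indep I w'.
Proof.
move=> hle; move: {2}(\sum_i (D' i - D i))%N (leqnn (\sum_i (D' i - D i))%N) => K.
elim: K D w hle => [|K IH] D w hle hK hD hw.
  exists w; split => // j; apply: mhomog_ext (hD j) => i.
  apply/eqP; rewrite eqn_leq hle andTb -subn_eq0 -leqn0.
  by apply: leq_trans hK; rewrite (bigD1 i) //= leq_addr.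
case: (boolP [exists i, D i < D' i]%N) => [/existsP [i hi]|hno].
  have [w1 [h1 i1]] := lift1 i hD hw.
  apply: (IH (addi D i) w1) => //.
    by move=> j; rewrite /addi; case: eqP => [->|_]; rewrite ?addn1 ?addn0 ?hle.
  rewrite -ltnS; apply: leq_trans hK.
  rewrite (bigD1 i) //= [X in (_ < X)%N](bigD1 i) //= /addi eqxx addn1.
  have -> : \sum_(j < k | j != i) (D' j - (D j + (j == i)))%N = \sum_(j < k | j != i) (D' j - D j)%N.
    by apply: eq_bigr => j /negbTE ->; rewrite addn0.
  by rewrite -addSn leq_add2r subnSK.
exists w; split => // j; apply: mhomog_ext (hD j) => i.
apply/eqP; rewrite eqn_leq hle andTb leqNgt; apply/negP => h.
by move/existsP: hno; apply; exists i.
Qed.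

End Lift.

Section Std.
Variables (F : numFieldType) (k : nat).
Local Notation S := {mpoly F[k + k]}.
Local Notation mnm := ('X_{1..k + k}).
Local Notation Zk := (@Zk_ideal F k).
Implicit Types (D E : 'I_k -> nat) (f g u : S).

Definition std (m : mnm) : bool := [forall i, m (yv i) <= 1]%N.
Definition Jt := {ffun 'I_k -> bool}.
Definition stdmon D (J : Jt) : mnm := mks (fun i => D i - J i)%N (fun i => nat_of_bool (J i)).
Definition np := #|{: Jt}|.
Definition ev (j : 'I_np) : Jt := enum_val j.

Lemma ev_inj : injective ev.
Proof. exact: enum_val_inj. Qed.

Lemma stdmon_inj D : injective (stdmon D).
Proof.
move=> J J' h; apply/ffunP => i; have := congr1 (fun m : mnm => m (yv i)) h.
by rewrite /stdmon !mks_y; case: (J i); case: (J' i).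
Qed.

Lemma stdmon_std D J : std (stdmon D J).
Proof. by apply/forallP => i; rewrite /stdmon mks_y; case: (J i). Qed.

Lemma stdmon_deg D J : (forall i, 0 < D i)%N -> mono_mdeg D (stdmon D J).
Proof.
move=> hD; apply/mono_mdegP => i; rewrite /mdegv /stdmon mks_x mks_y subnK //.
by case: (J i) => //; apply: hD.
Qed.

Lemma std_stdmon D m : std m -> mono_mdeg D m -> m = stdmon D [ffun i => m (yv i) == 1%N].
Proof.
move=> /forallP hs /mono_mdegP hd; apply: mnm_eqxy => i; rewrite /stdmon ?mks_x ?mks_y ffunE.
  rewrite -(hd i) /mdegv; have := hs i; case: (m (yv i)) => [|[|]] //= _.
    by rewrite subn0 addn0.
  by rewrite addnK.
by have := hs i; case: (m (yv i)) => [|[|]].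
Qed.

Lemma coef_fsum (s : seq mnm) (P : pred mnm) (c : mnm -> F) m : uniq s ->
  (\sum_(m' <- s | P m') c m' *: 'X_[m'] : S)@_m = if (m \in s) && P m then c m else 0.
Proof.
elim: s m => [|x s IH] m; first by rewrite big_nil mcoeff0.
rewrite cons_uniq => /andP [xs us]; rewrite big_cons in_cons.
case: (boolP (m == x)) => [/eqP ->|mx] /=.
  by case: (P x); rewrite ?mcoeffD ?mcoeffZ ?mcoeffX ?eqxx ?mulr1 IH // (negbTE xs) ?addr0.
case: (P x); rewrite ?mcoeffD ?mcoeffZ ?mcoeffX IH //.
by rewrite eq_sym (negbTE mx) mulr0 add0r.
Qed.

Lemma mcompE D f m : (mcomp D f)@_m = if mono_mdeg D m then f@_m else 0.
Proof.
rewrite /mcomp coef_fsum ?msupp_uniq //.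
case: (boolP (m \in msupp f)) => //= /memN_msupp_eq0 ->; by case: ifP.
Qed.

Lemma Zk_is_ideal : is_ideal Zk.
Proof.
split.
- by exists (fun _ => 0); rewrite big1 // => i _; rewrite mul0r.
- move=> f g [a ->] [b ->]; exists (fun i => a i + b i).
  by rewrite -big_split; apply: eq_bigr => i _; rewrite mulrDl.
- move=> f g [a ->]; exists (fun i => f * a i).
  by rewrite mulr_sumr; apply: eq_bigr => i _; rewrite mulrA.
Qed.

Lemma Zk_term c m : ~~ std m -> Zk (c *: 'X_[m]).
Proof.
rewrite negb_forall; case/existsP => i; rewrite -ltnNge => h2.
have le : ((U_(yv i) *+ 2)%MM <= m)%MM.
  apply/mnm_lepP => j; rewrite mulmnE mnm1E; case: eqP => [<-|] //=.
exists (fun i' => if i' == i then c *: 'X_[(m - U_(yv i) *+ 2)%MM] else 0).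
rewrite (bigD1 i) //= eqxx big1 ?addr0; last by move=> j /negbTE ->; rewrite mul0r.
by rewrite -scalerAl mpolyXn -mpolyXD submK.
Qed.

Lemma Zk_sum (T : Type) (r : seq T) (P : pred T) (G : T -> S) :
  (forall x, P x -> Zk (G x)) -> Zk (\sum_(x <- r | P x) G x).
Proof. move=> h; exact: (@Isum F k Zk Zk_is_ideal T r P G h). Qed.

Lemma Zk_char f : Zk f <-> (forall m, m \in msupp f -> ~~ std m).
Proof.
split.
- move=> [g ->] m /msupp_sum_le /flatten_mapP [i _].
  rewrite mpolyXn (perm_mem (msuppMX _ _)) => /mapP [m' _ ->].
  apply/negP => /forallP /(_ i); rewrite mnmDE mulmnE mnm1E eqxx.
  by case: (m' (yv i)).
- move=> h; rewrite (mpolyE f) big_seq; apply: Zk_sum => m /h.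
  exact: Zk_term.
Qed.

Lemma decomp f : exists z r, [/\ f = z + r, Zk z,
  (forall m, m \in msupp r -> std m) & (forall m, r@_m = if std m then f@_m else 0)].
Proof.
pose z := \sum_(m <- msupp f | ~~ std m) f@_m *: ('X_[m] : S).
pose r := \sum_(m <- msupp f | std m) f@_m *: ('X_[m] : S).
have rE : forall m, r@_m = if std m then f@_m else 0.
  move=> m; rewrite /r coef_fsum ?msupp_uniq //.
  case: (boolP (m \in msupp f)) => [//|/memN_msupp_eq0 ->]; by case: (std m).
exists z, r; split => //.
- by rewrite {1}(mpolyE f) (bigID std) /= addrC.
- by apply: Zk_sum => m; apply: Zk_term.
- by move=> m; rewrite mcoeff_msupp rE; case: (std m); rewrite ?eqxx.
Qed.

Lemma coef_bsum D (c : 'I_np -> F) m :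
  (\sum_j c j *: ('X_[stdmon D (ev j)] : S))@_m = \sum_j c j * (stdmon D (ev j) == m)%:R.
Proof.
elim/big_rec2: _ => [|j x y _ <-]; first by rewrite mcoeff0.
by rewrite mcoeffD mcoeffZ mcoeffX.
Qed.

Lemma coef_bsum_at D (c : 'I_np -> F) j0 :
  (\sum_j c j *: ('X_[stdmon D (ev j)] : S))@_(stdmon D (ev j0)) = c j0.
Proof.
rewrite coef_bsum (bigD1 j0) //= eqxx mulr1 big1 ?addr0 // => j nj.
case: eqP => [/stdmon_inj /ev_inj ej|_]; last by rewrite mulr0.
by rewrite ej eqxx in nj.
Qed.

Lemma coef_bsum_out D (c : 'I_np -> F) m : (forall j, stdmon D (ev j) != m) ->
  (\sum_j c j *: ('X_[stdmon D (ev j)] : S))@_m = 0.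
Proof.
by move=> h; rewrite coef_bsum big1 // => j _; rewrite (negbTE (h j)) mulr0.
Qed.

Lemma std_form D m : std m -> mono_mdeg D m -> exists j, m = stdmon D (ev j).
Proof.
move=> hs hd; exists (enum_rank [ffun i => m (yv i) == 1%N]).
by rewrite /ev enum_rankK; apply: std_stdmon.
Qed.

Lemma std_expand D g : mhomog D g -> (forall m, m \in msupp g -> std m) ->
  g = \sum_j g@_(stdmon D (ev j)) *: 'X_[stdmon D (ev j)].
Proof.
move=> hd hs; apply/mpolyP => m.
case: (boolP [exists j, stdmon D (ev j) == m]) => [/existsP [j /eqP <-]|hno].
  by rewrite coef_bsum_at.
rewrite coef_bsum_out; last by move=> j; apply/negP => hj; move/existsP: hno; apply; exists j.
apply/eqP; rewrite mcoeff_eq0; apply/negP => hm.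
have [j hj] := std_form (hs _ hm) (hd _ hm).
by move/existsP: hno; apply; exists j; rewrite hj.
Qed.

Lemma Zk_span D f : mhomog D f ->
  exists c : 'I_np -> F, Zk (f - \sum_j c j *: 'X_[stdmon D (ev j)]).
Proof.
move=> hf; have [z [r [fE hz hr rE]]] := decomp f.
have hrd : mhomog D r.
  move=> m; rewrite mcoeff_msupp rE; case: (std m); rewrite ?eqxx //.
  by move=> hm; apply: (hf m); rewrite mcoeff_msupp.
exists (fun j => r@_(stdmon D (ev j))).
by rewrite fE -(std_expand hrd hr) addrK.
Qed.

Lemma Zk_hilb D : (forall i, 0 < D i)%N -> hilb_eq Zk D np.
Proof.
move=> hD; exists (fun j => 'X_[stdmon D (ev j)]); split.
- by move=> j; apply: mhomogX; apply: stdmon_deg.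
- move=> c /Zk_char h j; apply/eqP; rewrite -(coef_bsum_at D c j).
  rewrite mcoeff_eq0; apply/negP => /h; by rewrite stdmon_std.
- move=> f hf; have [z [r [fE hz hr rE]]] := decomp f.
  have hrd : mhomog D r.
    move=> m; rewrite mcoeff_msupp rE; case: (std m); rewrite ?eqxx //.
    by move=> hm; apply: (hf m); rewrite mcoeff_msupp.
  exists (fun j => r@_(stdmon D (ev j))).
  by rewrite fE -(std_expand hrd hr) addrK.
Qed.

Lemma Zk_mhomog : is_mhomog_ideal Zk.
Proof.
split; first exact: Zk_is_ideal.
move=> f D /Zk_char h; apply/Zk_char => m; rewrite mcoeff_msupp mcompE.
by case: ifP => _; rewrite ?eqxx // -mcoeff_msupp; apply: h.
Qed.

Definition xpow (N : nat) : mnm := mks (fun _ => N) (fun _ => 0%N).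

Lemma xpow_deg N : mono_mdeg (fun _ => N) (xpow N).
Proof. by apply/mono_mdegP => i; rewrite /mdegv /xpow mks_x mks_y addn0. Qed.

Lemma std_xpow N m : std (xpow N + m)%MM = std m.
Proof. by apply: eq_forallb => i; rewrite mnmDE /xpow mks_y add0n. Qed.

Lemma coefXM_supp (a m : mnm) (p : S) : m \in msupp p -> (a + m)%MM \in msupp ('X_[a] * p).
Proof. by rewrite !mcoeff_msupp (mcoefXM a m p). Qed.

Lemma Zk_sat : B_saturated Zk.
Proof.
move=> f [N h]; apply/Zk_char => m hm.
have /Zk_char := h _ (xpow_deg N) => /(_ _ (coefXM_supp (xpow N) hm)).
by rewrite std_xpow.
Qed.

Lemma Zk_zero_dim : zero_dim_scheme Zk.
Proof.
split; [exact: Zk_mhomog|exact: Zk_sat|].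
exists np, 1%N => D hD; exact: Zk_hilb.
Qed.

End Std.

Section Main.
Variables (F : numFieldType) (k : nat) (d : 'I_k -> nat).
Hypothesis hd : forall i, (3 <= d i)%N.
Local Notation S := {mpoly F[k + k]}.
Local Notation mnm := ('X_{1..k + k}).
Local Notation Zk := (@Zk_ideal F k).
Local Notation T := (Wtensor F d).
Implicit Types (D E : 'I_k -> nat) (f g u : S).

Definition Mm : mnm := mks (fun i => (d i).-1) (fun _ => 1%N).

Lemma Wtensor_X : T = 'X_[Mm].
Proof.
rewrite mpolyXE_id big_split_ord /Wtensor big_split /=.
congr (_ * _); apply: eq_bigr => i _.
  by rewrite -[lshift k i]/(xv i) /Mm mks_x.
by rewrite -[rshift k i]/(yv i) /Mm mks_y expr1.
Qed.

Definition cM : F := \prod_(j < k + k) ((Mm j)`!)%:R.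

Lemma cM_neq0 : cM != 0.
Proof. by apply/prodf_neq0 => j _; rewrite pnatr_eq0 -lt0n fact_gt0. Qed.

Lemma apolar_X G : apolar G 'X_[Mm] = G@_Mm * cM.
Proof.
rewrite /apolar; case: (boolP (Mm \in msupp G)) => hM.
  rewrite (bigD1_seq Mm) ?msupp_uniq //= mcoeffX eqxx mulr1 [X in _ + X]big1 ?addr0 //.
  by move=> m /negbTE hm; rewrite mcoeffX eq_sym hm mulr0 mul0r.
rewrite (memN_msupp_eq0 hM) mul0r big1_seq // => m /andP [_ hm].
rewrite mcoeffX; case: eqP => [e|]; last by rewrite mulr0 mul0r.
by rewrite e in hM; rewrite (negbTE hM) in hm.
Qed.

Lemma Mm_std : std Mm.
Proof. by apply/forallP => i; rewrite /Mm mks_y. Qed.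

Lemma mhomog_sum D (n : nat) (G : 'I_n -> S) : (forall j, mhomog D (G j)) -> mhomog D (\sum_j G j).
Proof.
move=> h; elim/big_ind: _ => [|x y|j _]; [exact: mhomog0|exact: mhomogD|exact: h].
Qed.

Section Ideal.
Variable I : S -> Prop.
Hypothesis hI : is_ideal I.
Hypothesis hspan : in_span d I T.

Lemma Mcoef E g m : I g -> mhomog E g -> (forall i, E i <= d i)%N ->
  (m <= Mm)%MM -> mono_mdeg E m -> g@_m = 0.
Proof.
move=> Ig hg hE /mnm_lepP hm /mono_mdegP dm.
set a := (Mm - m)%MM.
have IP : I ('X_[a] * g) by apply: IMl.
have da : mono_mdeg (fun i => d i - E i)%N a.
  apply/mono_mdegP => i; rewrite /mdegv /a !mnmBE -(dm i) /mdegv.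
  have := hm (xv i); have := hm (yv i); have := hd i.
  rewrite /Mm !mks_x !mks_y; lia.
have hP : mhomog d ('X_[a] * g).
  apply: mhomog_ext (mhomogXM da hg) => i; by rewrite subnK.
have := (proj2 hspan) _ IP hP; rewrite Wtensor_X apolar_X.
rewrite -{1}(@submK _ m Mm); last exact/mnm_lepP.
rewrite mcoefXM => /eqP; rewrite mulf_eq0 (negbTE cM_neq0) orbF => /eqP.
exact.
Qed.

Lemma stdmon_le E J : (forall i, E i <= (d i).-1)%N -> (stdmon E J <= Mm)%MM.
Proof.
move=> hE; apply/mnm_lepP => j; case: (idx_cases j) => -[i ->];
  rewrite /stdmon /Mm ?mks_x ?mks_y.
  by apply: leq_trans (hE i); apply: leq_subr.
by case: (J i).
Qed.

Lemma std_indep E : (forall i, 0 < E i <= (d i).-1)%N ->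
  indep I (fun j => ('X_[stdmon E (ev j)] : S)).
Proof.
move=> hE c Ic j; rewrite -(coef_bsum_at E c j).
apply: (Mcoef (E := E)) => //.
- by apply: mhomog_sum => j'; apply: mhomogZ; apply: mhomogX; apply: stdmon_deg => i; case/andP: (hE i).
- move=> i; case/andP: (hE i) => _ h; apply: leq_trans h _; exact: leq_pred.
- by apply: stdmon_le => i; case/andP: (hE i).
- by apply: stdmon_deg => i; case/andP: (hE i).
Qed.

End Ideal.

Lemma upper I n q D (w : 'I_q -> S) : zero_dim_scheme I -> has_degree I n ->
  (forall j, mhomog D (w j)) -> indep I w -> (q <= n)%N.
Proof.
move=> [[hI _] hsat _] [N hN] hw iw.
have [w' [hw' iw']] := lift_to hI hsat (D' := fun i => maxn (D i) N) (fun i => leq_maxl _ _) hw iw.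
have [b [_ _ hb]] := hN (fun i => maxn (D i) N) (fun i => leq_maxr _ _).
apply: (count_le hI iw') => l; exact: hb.
Qed.

Definition eone : 'I_k -> nat := fun _ => 1%N.

Lemma lower I n : zero_dim_scheme I -> has_degree I n -> in_span d I T -> (np k <= n)%N.
Proof.
move=> hz hn hs; have hI : is_ideal I by case: hz => -[].
apply: (upper (D := eone) (w := fun j => ('X_[stdmon eone (ev j)] : S)) hz hn).
  by move=> j; apply: mhomogX; apply: stdmon_deg.
apply: std_indep => // i; rewrite /eone /=; have := hd i; case: (d i) => [|[|[|]]].
all: by [].
Qed.

Section Uniq.
Variable I : S -> Prop.
Hypothesis hz : zero_dim_scheme I.
Hypothesis hn : has_degree I (np k).
Hypothesis hs : in_span d I T.

Let hI : is_ideal I. Proof. by case: hz => -[]. Qed.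
Let hsat : B_saturated I. Proof. by case: hz. Qed.

Lemma key i (m' : mnm) : mono_mdeg (fun j => nat_of_bool (j != i)) m' ->
  I ('X_[(m' + U_(yv i) *+ 2)%MM]).
Proof.
move=> /mono_mdegP hm'; apply: NNPP => hg.
set mg := (m' + U_(yv i) *+ 2)%MM.
pose E := fun j : 'I_k => if j == i then 2%N else 1%N.
have hgE : mono_mdeg E mg.
  apply/mono_mdegP => j; have := hm' j; rewrite /mdegv /mg !mnmDE ?mulmnE !mnm1E.
  rewrite yxv_eq yv_eq /E eq_sym; case: (i == j) => /=; lia.
have hE : forall j, (0 < E j <= (d j).-1)%N.
  by move=> j; rewrite /E; have := hd j; case: (j == i); case: (d j) => [|[|[|]]].
have hE1 : forall j, (0 < E j)%N by move=> j; case/andP: (hE j).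
have gne : forall J, stdmon E J != mg.
  move=> J; apply/negP => /eqP /(congr1 (fun m : mnm => m (yv i))).
  by rewrite /stdmon mks_y /mg mnmDE ?mulmnE !mnm1E eqxx; case: (J i); lia.
pose w := fun j : 'I_(np k).+1 => match unlift ord0 j with
  | Some j' => ('X_[stdmon E (ev j')] : S) | None => 'X_[mg] end.
have hw : forall j, mhomog E (w j).
  move=> j; rewrite /w; case: (unlift ord0 j) => [j'|]; apply: mhomogX => //.
  exact: stdmon_deg.
have iw : indep I w.
  move=> c; rewrite big_ord_recl /w unlift_none.
  under eq_bigr do rewrite liftK.
  set G := (X in I X) => IG.
  have hG : mhomog E G.
    apply: mhomogD; first by apply: mhomogZ; apply: mhomogX.
    by apply: mhomog_sum => j; apply: mhomogZ; apply: mhomogX; apply: stdmon_deg.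
  have c1 : forall j', c (lift ord0 j') = 0.
    move=> j'; have := Mcoef hI hs IG hG (m := stdmon E (ev j')).
    rewrite /G mcoeffD mcoeffZ mcoeffX eq_sym (negbTE (gne _)) mulr0 add0r.
    rewrite (coef_bsum_at E (fun j => c (lift ord0 j))); apply.
    - move=> j; case/andP: (hE j) => _ h; apply: leq_trans h _; exact: leq_pred.
    - by apply: stdmon_le => j; case/andP: (hE j).
    - exact: stdmon_deg.
  have c0 : c ord0 = 0.
    case: (eqVneq (c ord0) 0) => // nz; exfalso; apply: hg.
    move: IG; rewrite /G big1 ?addr0; last by move=> j _; rewrite c1 scale0r.
    by move/(IZ hI (c ord0)^-1); rewrite scalerA mulVf ?scale1r.
  by move=> j; case: (unliftP ord0 j) => [j' ->|->].
have := upper hz hn hw iw; by rewrite ltnn.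
Qed.

Lemma Y2_in i : I ('X_(yv i) ^+ 2).
Proof.
apply: hsat; exists 1%N => m /mono_mdegP hall.
have hm := hall i; rewrite /mdegv in hm.
have gen : forall v : 'I_(k + k), (v = xv i \/ v = yv i) -> (0 < m v)%N ->
    I ('X_[m] * 'X_(yv i) ^+ 2).
  move=> v hv mv.
  have le : (U_(v) <= m)%MM by apply/mnm_lepP => j; rewrite mnm1E; case: eqP => [<-|].
  rewrite -(submK le) mpolyXD mpolyXn [X in X * _]mulrC -mulrA -mpolyXD.
  apply: (IMl hI); apply: key; apply/mono_mdegP => j.
  have := hall j; rewrite /mdegv !mnmBE !mnm1E.
  case: hv => hv; rewrite hv ?xv_eq ?xyv_eq ?yxv_eq ?yv_eq; rewrite hv in mv;
    case: (eqVneq i j) => [<-|nij] /=; rewrite ?eqxx /=; lia.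
case: (posnP (m (xv i))) => [x0|xp].
  apply: (gen (yv i)); [by right|lia].
by apply: (gen (xv i)); [left|].
Qed.

Lemma Zk_sub f : Zk f -> I f.
Proof.
move=> [g ->]; apply: (Isum hI) => i _; apply: (IMl hI); exact: Y2_in.
Qed.

Lemma I_sub f : I f -> Zk f.
Proof.
move=> If; have [z [r [fE hzk hr rE]]] := decomp f.
have Ir : I r.
  have -> : r = f - z by rewrite fE [z + r]addrC addrK.
  by apply: (IB hI) => //; apply: Zk_sub.
suff r0 : r = 0 by rewrite fE r0 addr0.
apply/mpolyP => m; rewrite mcoeff0; case: (eqVneq r@_m 0) => // nz; exfalso.
have hm : m \in msupp r by rewrite mcoeff_msupp.
pose D := fun i => mdegv m i.
have mD : mono_mdeg D m by apply/mono_mdegP.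
pose gm := mcomp D r.
have Igm : I gm by case: hz => -[_ h] _ _; apply: h.
have gmm : gm@_m = r@_m by rewrite /gm mcompE mD.
have hgm : mhomog D gm.
  by move=> m'; rewrite mcoeff_msupp mcompE; case: ifP => //; rewrite eqxx.
have sgm : forall m', m' \in msupp gm -> std m'.
  move=> m'; rewrite mcoeff_msupp mcompE; case: ifP; rewrite ?eqxx // => _.
  by rewrite -mcoeff_msupp; apply: hr.
have [N hN] := hn.
pose a := xpow k N.+1.
pose D' := fun i => (N.+1 + D i)%N.
pose g' := 'X_[a] * gm.
have Ig' : I g' by apply: (IMl hI).
have hg' : mhomog D' g' by apply: mhomogXM => //; apply: xpow_deg.
have sg' : forall m', m' \in msupp g' -> std m'.
  by move=> m' /msuppXM [m'' /sgm h ->]; rewrite std_xpow.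
have hD' : forall i, (0 < D' i)%N by [].
have [b' [hb1 hb2 hb3]] := hN D' (fun i => leq_trans (leqnSn N) (leq_addr _ _)).
have span : forall l, exists c : 'I_(np k) -> F,
    I (b' l - \sum_j c j *: ('X_[stdmon D' (ev j)] : S)).
  move=> l; have [c hc] := Zk_span (hb1 l); exists c; exact: Zk_sub.
have ib := transfer_indep hI hb2 span.
have g'E := std_expand hg' sg'.
have Isum' : I (\sum_j g'@_(stdmon D' (ev j)) *: ('X_[stdmon D' (ev j)] : S)) by rewrite -g'E.
have h0 := ib _ Isum'.
have sa : std (a + m)%MM by rewrite std_xpow; apply: hr.
have da : mono_mdeg D' (a + m)%MM by apply: mono_mdegD => //; apply: xpow_deg.
have [j hj] := std_form sa da.
by move: (h0 j); rewrite -hj /g' mcoefXM gmm; apply/eqP.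
Qed.

End Uniq.

End Main.

Lemma Zk_span_T (F : numFieldType) (k : nat) (d : 'I_k -> nat) :
  in_span d (@Zk_ideal F k) (Wtensor F d).
Proof.
rewrite Wtensor_X; split.
  apply/eqP => h; have := congr1 (mcoeff (Mm d)) h.
  by rewrite mcoeffX eqxx mcoeff0 => /eqP; rewrite oner_eq0.
move=> G /Zk_char hG _; rewrite apolar_X.
case: (boolP (Mm d \in msupp G)) => [/hG|/memN_msupp_eq0 ->]; last by rewrite mul0r.
by rewrite Mm_std.
Qed.

Unset Implicit Arguments. Set Strict Implicit. Set Printing Implicit Defensive.

Theorem theorem5p1 (R : realType) (k : nat) (d : 'I_k -> nat) :
  (1 <= k)%N -> (forall i, (3 <= d i)%N) ->
  zero_dim_scheme (@Zk_ideal R[i] k) /\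
  exists r : nat,
    [/\ is_cactus_rank d (Wtensor R[i] d) r,
        has_degree (@Zk_ideal R[i] k) r,
        in_span d (@Zk_ideal R[i] k) (Wtensor R[i] d) &
        forall I : {mpoly R[i][k + k]} -> Prop,
          zero_dim_scheme I -> has_degree I r -> in_span d I (Wtensor R[i] d) ->
          forall f, I f <-> Zk_ideal f].
Proof.
move=> _ hd.
have hdeg : has_degree (@Zk_ideal R[i] k) (np k).
  by exists 1%N => D hD; apply: Zk_hilb.
split; first exact: Zk_zero_dim.
exists (np k); split => //.
- split; first by exists (@Zk_ideal R[i] k); split => //; [exact: Zk_zero_dim|exact: Zk_span_T].
  by move=> I n hz hn hs; apply: (lower hd hz hn hs).
- exact: Zk_span_T.
- move=> I hz hn hs f; split; first exact: (I_sub hd hz hn hs).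
  exact: (Zk_sub hd hz hn hs).
Qed.
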